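(* Let $A$ be an involutive alphabet, let $\Gamma$ be an involutive $A$-tree and let $u,v$ be nodes of $\Gamma$. Then $\Gamma$ with root $u$ is regular if and only if $\Gamma$ with root $v$ is regular.
   Context: An $A$-graph is a pair $(V,E)$ with $E\subseteq V\times A\times V$; it is involutive if $(u,a,v)\in E\iff(v,a^{-1},u)\in E$. A path is reduced if it contains no edge immediately followed by its inverse edge. A rooted involutive graph is a tree if every vertex is the end of a unique reduced path from the root. A multi-edge NFA (mNFA) is $\mathcal{A}=(Q,A,T,\alpha,\lambda,\omega)$ with finite state set $Q$, finite alphabet $A$, finite transition set $T$, and maps $\alpha,\omega\colon T\to Q$ (start, end) and $\lambda\colon T\to A$ (label); parallel transitions with equal label are allowed. A run is a sequence of transitions $\tau_1\cdots\tau_\ell$ with $\omega(\tau_i)=\alpha(\tau_{i+1})$. For a state $p$, $\Gamma(p)$ is the graph whose nodes are runs starting at $p$ (root: the empty run), with an edge $\varrho\to\varrho\tau$ labeled $\lambda(\tau)$, closed under adding inverse edges (passing to $A^{\pm1}$ if $A$ is not involutive); node $\varrho$ is labeled by the state where it ends. A rooted node-labeled involutive $A$-tree is regular if it is isomorphic (as a rooted node-labeled $A$-graph, i.e. via a root-preserving label-preserving graph isomorphism together with a bijection between the sets of node labels compatible with the labelings) to $\Gamma(p)$ for some state $p$ of an mNFA with alphabet $A$; a rooted involutive $A$-tree is regular if it is regular for some node labeling. *)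

(* Defs.v *)
From mathcomp Require Import all_boot.
Set Implicit Arguments. Unset Strict Implicit. Unset Printing Implicit Defensive.

Section Graphs.
Variables (A : finType) (inv : A -> A).

Definition involutive_graph (V : Type) (E : V -> A -> V -> Prop) : Prop :=
  forall u a v, E u a v <-> E v (inv a) u.

(* A path starting at x is encoded by the list [(a1,v1);...;(an,vn)] of its
   edges (x,a1,v1),(v1,a2,v2),... *)
Fixpoint is_path (V : Type) (E : V -> A -> V -> Prop) (x : V)
    (p : seq (A * V)) : Prop :=
  match p with
  | [::] => True
  | (a, y) :: q => E x a y /\ is_path E y q
  end.

Fixpoint reduced (V : Type) (x : V) (p : seq (A * V)) : Prop :=
  match p with
  | (a, y) :: ((b, z) :: _) as q => ~ (b = inv a /\ z = x) /\ reduced y q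
  | _ => True
  end.

Definition path_end (V : Type) (x : V) (p : seq (A * V)) : V :=
  last x (map snd p).

Definition is_tree (V : Type) (E : V -> A -> V -> Prop) (r : V) : Prop :=
  forall v : V, exists! p : seq (A * V),
    is_path E r p /\ reduced r p /\ path_end r p = v.

End Graphs.

Record mNFA (A : finType) := MNFA {
  state : finType;
  trans : finType;
  alpha : trans -> state;   (* start *)
  omega : trans -> state;   (* end *)
  lambda : trans -> A
}.

Section RunTree.
Variables (A : finType) (inv : A -> A) (M : mNFA A).

Fixpoint is_run (q : state M) (s : seq (trans M)) : bool :=
  match s with
  | [::] => true
  | t :: s' => (alpha t == q) && is_run (omega t) s'
  end.

(* Nodes of Gamma(p): runs starting at p. *)
Definition run_node (p : state M) : Type := {s : seq (trans M) | is_run p s}.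

Definition run_root (p : state M) : run_node p :=
  exist (fun s => is_run p s) [::] (erefl true).

(* node label: the state where the run ends *)
Definition run_end (p : state M) (x : run_node p) : state M :=
  last p (map (@omega A M) (sval x)).

Definition run_edge (p : state M) (x : run_node p) (a : A) (y : run_node p)
    : Prop :=
  (exists t, sval y = rcons (sval x) t /\ lambda t = a) \/
  (exists t, sval x = rcons (sval y) t /\ a = inv (lambda t)).

End RunTree.

Definition regular_labeled (A : finType) (inv : A -> A) (V : Type)
    (E : V -> A -> V -> Prop) (r : V) (L : Type) (l : V -> L) : Prop :=
  exists (M : mNFA A) (p : state M) (phi : V -> run_node p),
    bijective phi /\ phi r = run_root p /\
    (forall x a y, E x a y <-> run_edge inv (phi x) a (phi y)) /\
    exists beta : L -> state M,
      (forall x, beta (l x) = run_end (phi x)) /\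
      (forall x y, beta (l x) = beta (l y) -> l x = l y).

Definition regular_tree (A : finType) (inv : A -> A) (V : Type)
    (E : V -> A -> V -> Prop) (r : V) : Prop :=
  exists (L : Type) (l : V -> L), regular_labeled inv E r l.

(* Main.v *)
Require Import Defs.
From mathcomp Require Import all_boot.
Set Implicit Arguments. Unset Strict Implicit. Unset Printing Implicit Defensive.

Section Generic.
Variables (A : finType) (inv : A -> A) (Hinv : involutive inv).

Definition redge (M : mNFA A) (x : seq (trans M)) (a : A) (y : seq (trans M)) : Prop :=
  (exists t, y = rcons x t /\ lambda t = a) \/
  (exists t, x = rcons y t /\ a = inv (lambda t)).

Lemma node_eq (M : mNFA A) (p : state M) (x y : run_node p) : sval x = sval y -> x = y.
Proof. case: x => x Hx; case: y => y Hy /= E; subst; f_equal; exact: bool_irrelevance. Qed.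

Lemma redge_sym (M : mNFA A) x a y : @redge M x a y -> redge y (inv a) x.
Proof.
case=> [[t [H1 H2]]|[t [H1 H2]]].
  by right; exists t; rewrite H1 H2.
by left; exists t; rewrite H1 H2 Hinv.
Qed.

Lemma lift_edge (M1 M2 : mNFA A) (p1 : state M1) (p2 : state M2)
  (f : run_node p1 -> run_node p2) :
  (forall (x y : run_node p1) t, sval y = rcons (sval x) t ->
       redge (sval (f x)) (lambda t) (sval (f y))) ->
  forall x a y, run_edge inv x a y -> run_edge inv (f x) a (f y).
Proof.
move=> H x a y [[t [H1 H2]]|[t [H1 H2]]].
  by rewrite -H2; apply: H.
rewrite H2; apply: redge_sym; exact: H.
Qed.
End Generic.

Section Reroot.
Variables (A : finType) (inv : A -> A) (Hinv : involutive inv).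
Variables (M : mNFA A) (p : state M) (tau : trans M) (Htau : alpha tau = p).
Let q := omega tau.

Definition S' : finType := (state M + option bool)%type.
Definition T' : finType := ((option bool * trans M) + unit)%type.
Definition qq : S' := inr (Some true).
Definition pp : S' := inr (Some false).
Definition dead : S' := inr None.
Definition alpha' (t : T') : S' := match t with
 | inl (None, t) => inl (alpha t)
 | inl (Some true, t) => if alpha t == q then qq else dead
 | inl (Some false, t) => if (alpha t == p) && (t != tau) then pp else dead
 | inr _ => qq end.
Definition omega' (t : T') : S' := match t with inl (_, t) => inl (omega t) | inr _ => pp end.
Definition lambda' (t : T') : A := match t with inl (_, t) => lambda t | inr _ => inv (lambda tau) end.
Definition M' : mNFA A := @MNFA A S' T' alpha' omega' lambda'.

Definition orig (t : trans M) : T' := inl (None, t).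
Definition back : T' := inr tt.
Definition unorig (t : T') : trans M := match t with inl (_, t) => t | inr _ => tau end.

Definition psi (s : seq (trans M)) : seq (trans M') := match s with
 | [::] => [:: back]
 | t :: s' => if t == tau then (match s' with [::] => [::] | t1 :: s1 => inl (Some true, t1) :: map orig s1 end)
    else back :: inl (Some false, t) :: map orig s'
 end.
Definition chi (w : seq (trans M')) : seq (trans M) := match w with
 | [::] => [:: tau]
 | inr _ :: s' => map unorig s'
 | inl (_, t) :: s' => tau :: t :: map unorig s'
 end.

Lemma run_map_orig s w : @is_run A M' (inl s) (map orig w) = is_run s w.
Proof.
elim: w s => [//|t w IH] s /=.
by rewrite IH.
Qed.

Lemma run_inl s w : @is_run A M' (inl s) w -> w = map orig (map unorig w) /\ is_run s (map unorig w).
Proof.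
elim: w s => [//|t w IH] s /=.
case: t => [[[[]|] t]|[]] /=.
- by case: (alpha t == q).
- by case: ((alpha t == p) && (t != tau)).
- case/andP=> /eqP [<-] /IH [E R]. by rewrite -E eqxx R.
- by [].
Qed.

Lemma chi_psi s : chi (psi s) = s.
Proof.
case: s => [//|t s] /=.
case: ifP => [/eqP ->|_]; last by rewrite /= -map_comp map_id.
by case: s => [//|t1 s1] /=; rewrite -map_comp map_id.
Qed.

Lemma psi_run s : is_run p s -> @is_run A M' qq (psi s).
Proof.
case: s => [//|t s] /= /andP [/eqP Ht R].
case: ifP => [/eqP Et|Nt].
  case: s R => [//|t1 s1] /= /andP [/eqP H1 R].
  by rewrite /q -Et H1 eqxx /= run_map_orig.
by rewrite /= Ht eqxx Nt /= run_map_orig.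
Qed.

Lemma chi_run w : @is_run A M' qq w -> is_run p (chi w).
Proof.
case: w => [|t w] /=; first by rewrite Htau eqxx.
case: t => [[[[]|] t]|[]] /=.
- case: ifP => // /eqP Ht /andP [_ /run_inl [_ R]].
  by rewrite Htau eqxx /= ?Ht ?eqxx.
- by case: ((alpha t == p) && (t != tau)).
- by [].
- case: w => [//|t1 w] /=.
  case: t1 => [[[[]|] t1]|[]] /=.
  + by case: (alpha t1 == q).
  + case: ifP => // /andP [/eqP H1 _] /run_inl [_ R].
    by rewrite H1 eqxx.
  + by [].
  + by [].
Qed.

Lemma psi_chi w : @is_run A M' qq w -> psi (chi w) = w.
Proof.
case: w => [|t w] /=; first by rewrite eqxx.
case: t => [[[[]|] t]|[]] /=.
- case: ifP => // _ /andP [_ /run_inl [E _]].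
  by rewrite eqxx -E.
- by case: ((alpha t == p) && (t != tau)).
- by [].
- case: w => [//|t1 w] /=.
  case: t1 => [[[[]|] t1]|[]] /=.
  + by case: (alpha t1 == q).
  + case: ifP => // /andP [_ N] /run_inl [E _].
    by rewrite (negbTE N) -E.
  + by [].
  + by [].
Qed.

Lemma psi_edge x t : @redge A inv M' (psi x) (lambda t) (psi (rcons x t)).
Proof.
case: x => [|t0 x] /=.
  case: ifP => [/eqP ->|_].
    by right; exists back; split => //=; rewrite Hinv.
  by left; exists (inl (Some false, t)).
case: ifP => _.
  case: x => [|t1 x] /=; first by left; exists (inl (Some true, t)).
  by left; exists (orig t); rewrite map_rcons.
by left; exists (orig t); rewrite map_rcons.
Qed.

Lemma run_last (N : mNFA A) (s : state N) x t :
  is_run s (rcons x t) -> alpha t = last s (map (@omega A N) x).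
Proof.
elim: x s => [|t0 x IH] s /=; first by case/andP=> /eqP.
by case/andP=> _ /IH.
Qed.

Lemma chi_edge x t : @is_run A M' qq (rcons x t) -> @redge A inv M (chi x) (lambda' t) (chi (rcons x t)).
Proof.
move=> R.
case: x R => [|t0 x] R /=.
  case: t R => [[b t]|[]] _ /=.
    by left; exists t.
  by right; exists tau.
have Nt : t <> back.
  move/run_last: R => /= H E; subst t; move: H.
  rewrite /= /qq; case: (lastP x) => [|x' tl]; first by case: t0 => [[b ?]|[]].
  by rewrite map_rcons last_rcons; case: tl => [[b ?]|[]].
have Hl : lambda' t = lambda (unorig t).
  by move: Nt; clear R; case: t => [[b ?]|[]].
case: t0 R => [[b t0]|[]] R /=.
  by left; exists (unorig t); rewrite map_rcons; split => //; rewrite Hl.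
case: x R => [|t1 x] R /=.
  by left; exists (unorig t); split => //; rewrite Hl.
by left; exists (unorig t); rewrite map_rcons; split => //; rewrite Hl.
Qed.

End Reroot.

Lemma step (A : finType) (inv : A -> A) (Hinv : involutive inv)
    (V : Type) (E : V -> A -> V -> Prop) x a y :
  E x a y -> regular_tree inv E x -> regular_tree inv E y.
Proof.
move=> Exy [L [l [M [p [phi [Hbij [Hroot [Hedge _]]]]]]]].
have := proj1 (Hedge x a y) Exy; rewrite Hroot.
case=> [[t [Ht Hl]]|[t [Ht _]]]; last first.
  by have := congr1 size Ht; rewrite size_rcons.
have Htau : alpha t = p.
  by have := proj2_sig (phi y); rewrite Ht /= andbT => /eqP.
pose N := M' inv p t.
pose Psi (z : run_node p) : @run_node A N (qq M) :=
  exist _ (psi inv p t (sval z)) (psi_run inv t (proj2_sig z)).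
pose Chi (z : @run_node A N (qq M)) : run_node p :=
  exist _ (chi (sval z)) (chi_run Htau (proj2_sig z)).
have PC : cancel Psi Chi by move=> z; apply: node_eq => /=; rewrite chi_psi.
have CP : cancel Chi Psi by move=> z; apply: node_eq => /=; rewrite psi_chi //; exact: proj2_sig z.
have EP : forall u b w, run_edge inv u b w -> run_edge inv (Psi u) b (Psi w).
  apply: lift_edge => // u w t' H; rewrite /= H.
  exact: psi_edge.
have EC : forall u b w, run_edge inv u b w -> run_edge inv (Chi u) b (Chi w).
  apply: lift_edge => // u w t' H; rewrite /= H.
  apply: chi_edge; rewrite -H; exact: proj2_sig w.
exists (state N), (fun z => run_end (Psi (phi z))), N, (qq M), (fun z => Psi (phi z)).
split; first exact: bij_comp (Bijective PC CP) Hbij.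
split; first by apply: node_eq; rewrite /= Ht /= eqxx.
split; last by exists id.
move=> u b w; split.
  by move/(proj1 (Hedge u b w)); apply: EP.
by move/EC; rewrite !PC => /(proj2 (Hedge u b w)).
Qed.

Lemma path_reg (A : finType) (inv : A -> A) (Hinv : involutive inv)
    (V : Type) (E : V -> A -> V -> Prop) (Hinvol : involutive_graph inv E) :
  forall pth x, is_path E x pth ->
  (regular_tree inv E x <-> regular_tree inv E (path_end x pth)).
Proof.
elim=> [|[a y] pth IH] x /=; first by [].
case=> Exy Hp.
have -> : path_end x ((a, y) :: pth) = path_end y pth by [].
have [H1 H2] := IH y Hp.
split=> H; first by apply: H1; exact: step Exy H.
by apply: step Hinv _ _ _ _ _ (proj1 (Hinvol x a y) Exy) (H2 H).
Qed.

Theorem proposition3p2 (A : finType) (inv : A -> A) (Hinv : involutive inv)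
    (V : Type) (E : V -> A -> V -> Prop) (r : V)
    (Hinvol : involutive_graph inv E) (Htree : is_tree inv E r)
    (u v : V) :
  regular_tree inv E u <-> regular_tree inv E v.
Proof.
have [pu [[Pu [_ Eu]] _]] := Htree u.
have [pv [[Pv [_ Ev]] _]] := Htree v.
rewrite -Eu -Ev.
have [A1 A2] := path_reg Hinv Hinvol Pu.
have [B1 B2] := path_reg Hinv Hinvol Pv.
by split=> H; [apply: B1; apply: A2 | apply: A1; apply: B2].
Qed.
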